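(* Let $t\ge 2$, let $n_1,\dots,n_t$ be positive integers, and let $G=K_{n_1,\dots,n_t}$ be the complete $t$-partite graph with partite sets $V_1,\dots,V_t$, $|V_i|=n_i$. Let $N_t=\{1,\dots,t\}$ and $f(I)=\sum_{i\in I}n_i$ for $I\subseteq N_t$. Let $p$ be a positive integer with $f(N_t)>p$. Let $D$ be an optimal $\gamma_p(G)$-set, let $\ell=\min\{|D_i|: i\in N_t\setminus I_D\}$ and $A=\{i\in N_t\setminus I_D: |D_i|=\ell+1\}$. Then $|A|=0$ or $2\le |A|\le t-|I_D|-1$.
   Context: A set $S\subseteq V(G)$ is a $p$-dominating set of $G$ if every vertex $v\in V(G)\setminus S$ has at least $p$ neighbors in $S$. The $p$-domination number $\gamma_p(G)$ is the minimum cardinality of a $p$-dominating set of $G$, and a $\gamma_p(G)$-set is a $p$-dominating set of cardinality $\gamma_p(G)$. For $D\subseteq V(G)$ write $D_i=V_i\cap D$ for $i\in N_t$ and $I_D=\{i\in N_t: |D_i|=|V_i|\}$. For a $\gamma_p(G)$-set $D$ with $|I_D|<t$ define $$\mu(D)=\sum_{i\in N_t\setminus I_D}\left|\,|D_i|-\frac{|D|-f(I_D)}{t-|I_D|}\right|.$$ A $\gamma_p(G)$-set $D$ is optimal if: (1) $f(I_D)<p$; (2) $|I_D|\ge |I_S|$ for every $\gamma_p(G)$-set $S$; (3) $\mu(D)\le\mu(S)$ for every $\gamma_p(G)$-set $S$ with $I_S=I_D$. (For an optimal $D$, $N_t\setminus I_D\neq\emptyset$ and every $|D_i|$, $i\in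 N_t\setminus I_D$, equals $\ell$ or $\ell+1$; the paper defines $A$ as the set of those $i$ with $|D_i|=\ell+1$, which is empty when all these values equal $\ell$.) *)

(* Defs.v *)
From HB Require Import structures.
From mathcomp Require Import all_boot all_order all_algebra.
Set Implicit Arguments. Unset Strict Implicit. Unset Printing Implicit Defensive.
Import Order.TTheory GRing.Theory Num.Theory.

(* Complete t-partite graph K_{n_1,...,n_t}: partite sets indexed by 'I_t
   (i.e. N_t = {0,...,t-1}), V_i = { (i, j) | j < n i }. *)
Definition vtx (t : nat) (n : 'I_t -> nat) : finType := {i : 'I_t & 'I_(n i)}.

Definition kadj (t : nat) (n : 'I_t -> nat) (u v : vtx n) : bool := tag u != tag v.

Definition p_dominating (t : nat) (n : 'I_t -> nat) (p : nat) (S : {set vtx n}) : Prop :=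
  forall v : vtx n, v \notin S -> p <= #|[set u in S | kadj u v]|.

Definition gamma_p_set (t : nat) (n : 'I_t -> nat) (p : nat) (S : {set vtx n}) : Prop :=
  p_dominating p S /\ (forall S' : {set vtx n}, p_dominating p S' -> #|S| <= #|S'|).

Definition part (t : nat) (n : 'I_t -> nat) (D : {set vtx n}) (i : 'I_t) : {set vtx n} :=
  [set v in D | tag v == i].

Definition fullI (t : nat) (n : 'I_t -> nat) (D : {set vtx n}) : {set 'I_t} :=
  [set i | #|part D i| == n i].

Definition fsum (t : nat) (n : 'I_t -> nat) (I : {set 'I_t}) : nat := \sum_(i in I) n i.

(* mu(D) (rational valued); only meaningful when |I_D| < t *)
Definition mu (t : nat) (n : 'I_t -> nat) (D : {set vtx n}) : rat :=
  \sum_(i in ~: fullI D)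
     `| (#|part D i|%:R - ((#|D|%:R - (fsum n (fullI D))%:R) / (t - #|fullI D|)%:R)) : rat |%R.

Definition optimal (t : nat) (n : 'I_t -> nat) (p : nat) (D : {set vtx n}) : Prop :=
  [/\ gamma_p_set p D,
      fsum n (fullI D) < p,
      (forall S : {set vtx n}, gamma_p_set p S -> #|fullI S| <= #|fullI D|) &
      (forall S : {set vtx n}, gamma_p_set p S -> fullI S = fullI D -> (mu D <= mu S)%R)].

(* Main.v *)
Require Import Defs.
From HB Require Import structures.
From mathcomp Require Import all_boot all_order all_algebra.
From mathcomp Require Import zify ring lra.
Set Implicit Arguments. Unset Strict Implicit. Unset Printing Implicit Defensive.
Import Order.TTheory GRing.Theory Num.Theory.

Definition Vs (t : nat) (n : 'I_t -> nat) (i : 'I_t) : {set vtx n} := [set w | tag w == i].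

Lemma card_Vs t (n : 'I_t -> nat) i : #|Vs n i| = n i.
Proof.
have -> : Vs n i = [set Tagged (fun k => 'I_(n k)) j | j : 'I_(n i)].
  apply/setP => w; rewrite !inE; case: w => k j /=.
  apply/eqP/imsetP.
  - by move=> ek; subst k; exists j.
  - by case=> j' _ e; move: (f_equal (@tag _ _) e).
rewrite card_imset ?card_ord //.
by move=> a b e; apply: eq_from_Tagged e.
Qed.

Lemma part_sub t (n : 'I_t -> nat) (D : {set vtx n}) i : part D i \subset Vs n i.
Proof. by apply/subsetP => v; rewrite !inE => /andP[]. Qed.

Lemma part_le t (n : 'I_t -> nat) (D : {set vtx n}) i : #|part D i| <= n i.
Proof. by rewrite -card_Vs subset_leq_card // part_sub. Qed.

Lemma nonfullP t (n : 'I_t -> nat) (D : {set vtx n}) i :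
  reflect (exists2 v, v \notin D & tag v = i) (i \notin fullI D).
Proof.
rewrite inE; apply: (iffP idP).
- move=> hne.
  have : ~~ (Vs n i \subset part D i).
    apply/negP => hs; move: (subset_leq_card hs); rewrite card_Vs => h.
    by move: hne (part_le D i); rewrite eqn_leq h andbT => /negP.
  case/subsetPn => v; rewrite !inE => /eqP tv; rewrite tv eqxx andbT => vD.
  by exists v.
- case=> v vD tv; apply/negP => /eqP he.
  have : part D i == Vs n i by rewrite eqEcard part_sub card_Vs he leqnn.
  move/eqP/setP/(_ v); rewrite !inE tv eqxx andbT => h.
  by move: vD; rewrite h.
Qed.

Lemma part_subD t (n : 'I_t -> nat) (D : {set vtx n}) i : part D i \subset D.
Proof. by apply/subsetP => v; rewrite !inE => /andP[]. Qed.

Lemma pdomE t (n : 'I_t -> nat) p (S : {set vtx n}) :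
  p_dominating p S <-> forall v, v \notin S -> p + #|part S (tag v)| <= #|S|.
Proof.
have E v : #|[set u in S | kadj u v]| = #|S| - #|part S (tag v)|.
  have -> : [set u in S | kadj u v] = S :\: part S (tag v).
    by apply/setP => u; rewrite !inE /kadj; case: (u \in S); rewrite ?andbF //= andbT.
  by rewrite cardsD (setIidPr (part_subD _ _)).
have le (w : vtx n) : #|part S (tag w)| <= #|S| by apply: subset_leq_card; apply: part_subD.
split=> h w wS; move: (h w wS) (le w); rewrite ?E; lia.
Qed.

Lemma card_sum_parts t (n : 'I_t -> nat) (D : {set vtx n}) :
  #|D| = \sum_(i < t) #|part D i|.
Proof.
rewrite -sum1_card (partition_big (fun v : vtx n => tag v) xpredT) //=.
apply: eq_bigr => i _; rewrite -sum1_card; apply: eq_bigl => v; by rewrite !inE.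
Qed.

Lemma partD1 t (n : 'I_t -> nat) (A : {set vtx n}) x b : part (A :\ x) b = part A b :\ x.
Proof. by apply/setP => v; rewrite !inE andbA. Qed.


Lemma card_partD1 t (n : 'I_t -> nat) (A : {set vtx n}) x b :
  #|part (A :\ x) b| = #|part A b| - ((x \in A) && (tag x == b)).
Proof.
rewrite partD1 (cardsD1 x (part A b)) !inE; lia.
Qed.

Lemma remove_dom t (n : 'I_t -> nat) p (D : {set vtx n}) x a :
  p_dominating p D -> x \in D -> tag x = a -> a \notin fullI D ->
  (forall i, i \notin fullI D -> i != a -> #|part D i| < #|part D a|) ->
  p_dominating p (D :\ x).
Proof.
move=> /pdomE hD xD tx anf hlt; apply/pdomE => v vD.
have [w wD tw] := nonfullP D a anf.
have hw := hD w wD; rewrite tw in hw.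
have cD : #|D| = #|D :\ x| + 1 by rewrite (cardsD1 x D) xD; lia.
have xa : 0 < #|part D a| by apply/card_gt0P; exists x; rewrite !inE xD tx eqxx.
rewrite card_partD1 xD /=.
case: (tag x =P tag v) => [e|ne] /=.
  rewrite -e tx; move: hw xa; rewrite cD; set A := #|part D a|; set B := #|D :\ x|; lia.
have vx : v != x by apply/eqP => e; apply: ne; rewrite e.
have vD' : v \notin D by move: vD; rewrite !inE vx.
have h1 := hD v vD'.
have bnf : tag v \notin fullI D by apply/nonfullP; exists v.
have h2 : #|part D (tag v)| < #|part D a|.
  apply: (hlt _ bnf); rewrite -tx eq_sym; exact/eqP.
move: h1 h2 hw; rewrite cD /=; set A := #|part D a|; set B := #|D :\ x|; set C := #|part D (tag v)|; lia.
Qed.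

Lemma partU1 t (n : 'I_t -> nat) (A : {set vtx n}) y b :
  part (y |: A) b = if tag y == b then y |: part A b else part A b.
Proof.
apply/setP => v; case: ifP => hy; rewrite !inE; case: (v =P y) => [->|nv] //=.
by rewrite hy andbF.
Qed.

Lemma card_part_move t (n : 'I_t -> nat) (D : {set vtx n}) x y b :
  x \in D -> y \notin D ->
  #|part (y |: (D :\ x)) b| + (tag x == b) = #|part D b| + (tag y == b).
Proof.
move=> xD yD; rewrite partU1.
have yn : y \notin part (D :\ x) b by rewrite !inE (negbTE yD) andbF.
case: ifP => hy; rewrite ?cardsU1 ?yn card_partD1 xD /=;
  have := part_le D b; have : (tag x == b) -> 0 < #|part D b|
    by move=> hx; apply/card_gt0P; exists x; rewrite !inE xD hx.
all: case: (tag x == b) => /=; set C := #|part D b|; lia.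
Qed.

Lemma card_move t (n : 'I_t -> nat) (D : {set vtx n}) x y :
  x \in D -> y \notin D -> #|y |: (D :\ x)| = #|D|.
Proof.
move=> xD yD; rewrite cardsU1 !inE negb_and yD orbT (cardsD1 x D) xD.
set C := #|D :\ x|; lia.
Qed.

Lemma move_dom t (n : 'I_t -> nat) p (D : {set vtx n}) x y j i0 :
  p_dominating p D -> x \in D -> tag x = j -> y \notin D -> tag y = i0 -> j != i0 ->
  j \notin fullI D -> #|part D i0| < #|part D j| -> p_dominating p (y |: (D :\ x)).
Proof.
move=> /pdomE hD xD tx yD ty ji0 jnf hlt; apply/pdomE => v vD.
have [w wD tw] := nonfullP D j jnf.
have hw := hD w wD; rewrite tw in hw.
rewrite card_move //.
have := card_part_move (tag v) xD yD; rewrite tx ty.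
case: (j =P tag v) => [e|ne]; case: (i0 =P tag v) => [e'|ne'] /=.
- by move: ji0; rewrite e e' eqxx.
- rewrite -e; move: hw; set A := #|part D j|; set B := #|D|; set C := #|part _ j|; lia.
- rewrite -e'; move: hw hlt; set A := #|part D j|; set B := #|D|; set C := #|part _ i0|;
  set E := #|part D i0|; lia.
- have vD' : v \notin D.
    move: vD; rewrite !inE negb_or negb_and => /andP[hvy /orP[/negbNE hvx|->]] //.
    by case: ne; rewrite (eqP hvx) tx.
  move: (hD v vD'); set A := #|part D (tag v)|; set B := #|D|; set C := #|part _ (tag v)|; lia.
Qed.

Lemma key_ineq (a b c : rat) : (b < c)%R -> (c < a)%R -> (b + 2 <= a)%R ->
  (`|a - 1 - c| + `|b + 1 - c| < `|a - c| + `|b - c|)%R.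
Proof.
move=> bc ca ba.
rewrite (@gtr0_norm _ (a - c)) ?subr_gt0 // (@ltr0_norm _ (b - c)) ?subr_lt0 //.
have h1 : (0 <= a - 1 - c \/ a - 1 - c < 0)%R by case: (lerP 0 (a - 1 - c)); [left|right].
have h2 : (0 <= b + 1 - c \/ b + 1 - c < 0)%R by case: (lerP 0 (b + 1 - c)); [left|right].
case: h1 => h1; case: h2 => h2;
  rewrite ?(ger0_norm h1) ?(ltr0_norm h1) ?(ger0_norm h2) ?(ltr0_norm h2); lra.
Qed.

Lemma sum_lt2 (T : finType) (P : {set T}) (F G : T -> rat) j k :
  j \in P -> k \in P -> j != k ->
  (forall i, i \in P -> i != j -> i != k -> F i = G i) ->
  (F j + F k < G j + G k)%R ->
  (\sum_(i in P) F i < \sum_(i in P) G i)%R.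
Proof.
move=> jP kP jk hFG hlt.
rewrite (bigD1 j jP) (bigD1 j jP) /=.
have kP' : (k \in P) && (k != j) by rewrite kP eq_sym jk.
rewrite (bigD1 k kP') (bigD1 k kP') /= !addrA.
rewrite (eq_bigr G); first by rewrite ltrD2r.
by move=> i /andP[/andP[iP ij] ik]; apply: hFG.
Qed.

Lemma sum_gt_const (T : finType) (P : {set T}) (F : T -> nat) lo j :
  j \in P -> (forall i, i \in P -> lo <= F i) -> lo < F j ->
  #|P| * lo < \sum_(i in P) F i.
Proof.
move=> jP hlo hj.
have -> : \sum_(i in P) F i = \sum_(i in P) lo + \sum_(i in P) (F i - lo).
  rewrite -big_split /=; apply: eq_bigr => i iP; have := hlo i iP; lia.
rewrite sum_nat_const -[X in X < _]addn0 ltn_add2l (bigD1 j jP) /=; lia.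
Qed.

Lemma sum_lt_const (T : finType) (P : {set T}) (F : T -> nat) hi j :
  j \in P -> (forall i, i \in P -> F i <= hi) -> F j < hi ->
  \sum_(i in P) F i < #|P| * hi.
Proof.
move=> jP hhi hj.
have -> : #|P| * hi = \sum_(i in P) F i + \sum_(i in P) (hi - F i).
  rewrite -sum_nat_const -big_split /=; apply: eq_bigr => i iP; have := hhi i iP; lia.
rewrite -[X in X < _]addn0 ltn_add2l (bigD1 j jP) /=; lia.
Qed.

Lemma sum_split t (n : 'I_t -> nat) (D : {set vtx n}) :
  #|D| = fsum n (fullI D) + \sum_(i in ~: fullI D) #|part D i|.
Proof.
rewrite card_sum_parts (bigID (fun i => i \in fullI D)) /=; congr (_ + _).
- by apply: eq_bigr => i; rewrite inE => /eqP.
- by apply: eq_bigl => i; rewrite in_setC.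
Qed.


Theorem lemma5 (t : nat) (n : 'I_t -> nat) (p : nat) (D : {set vtx n}) (l : nat) :
  2 <= t ->
  (forall i, 0 < n i) ->
  0 < p ->
  p < fsum n [set: 'I_t] ->
  optimal p D ->
  (* l = min { |D_i| : i in N_t \ I_D } *)
  (exists2 i, i \notin fullI D & #|part D i| = l) ->
  (forall i, i \notin fullI D -> l <= #|part D i|) ->
  let A := [set i | (i \notin fullI D) && (#|part D i| == l.+1)] in
  #|A| = 0 \/ (2 <= #|A| /\ #|A| <= t - #|fullI D| - 1).
Proof.
move=> t2 npos p0 pf [[pD minD] fp maxI minmu] [i0 i0nf i0l] lmin A.
have hM : forall i, i \notin fullI D -> #|part D i| <= l.+1.
  case: (@arg_maxnP _ i0 (fun i => i \notin fullI D) (fun i => #|part D i|) i0nf) => j jnf jmax.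
  move=> i inf; apply: leq_trans (jmax i inf) _.
  rewrite leqNgt; apply/negP => hj.
  have [x xP] : exists x, x \in part D j by apply/card_gt0P; lia.
  move: xP; rewrite inE => /andP[xD /eqP tx].
  have [y yD ty] := nonfullP D i0 i0nf.
  have ji0 : j != i0 by apply/eqP => e; move: hj; rewrite e i0l; lia.
  set D' := y |: (D :\ x).
  have pD' : p_dominating p D'.
    by apply: (move_dom pD xD tx yD ty ji0 jnf); rewrite i0l; lia.
  have cD' : #|D'| = #|D| := card_move xD yD.
  have gD' : gamma_p_set p D' by split=> // S' hS'; rewrite cD'; apply: minD.
  have cp := card_part_move _ xD yD; rewrite -/D' tx ty in cp.
  have oth : forall k, k != j -> k != i0 -> (k \in fullI D') = (k \in fullI D).
    move=> k kj ki0; rewrite !inE; have := cp k.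
    by rewrite eq_sym (negbTE kj) eq_sym (negbTE ki0) !addn0 => ->.
  have xD' : x \notin D'.
    rewrite !inE eqxx /= orbF; apply/eqP => e; move: ji0; rewrite -tx -ty e eqxx //.
  have jD' : j \notin fullI D' by apply/nonfullP; exists x.
  have cpi0 : #|part D' i0| = #|part D i0|.+1.
    by have := cp i0; rewrite (negbTE ji0) eqxx addn0 addn1.
  case: (boolP (#|part D i0|.+1 == n i0)) => hfull.
    have : fullI D \proper fullI D'.
      apply/properP; split.
        apply/subsetP => k kI.
        have kj : k != j by apply/eqP => e; move: jnf; rewrite -e kI.
        have ki0 : k != i0 by apply/eqP => e; move: i0nf; rewrite -e kI.
        by rewrite oth.
      by exists i0 => //; rewrite inE cpi0.
    move/proper_card => hc; have := maxI _ gD'; lia.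
  have fI : fullI D' = fullI D.
    apply/setP => k; case: (k =P j) => [->|kj]; first by rewrite (negbTE jD') (negbTE jnf).
    case: (k =P i0) => [->|ki0]; last by apply: oth; apply/eqP.
    by rewrite (negbTE i0nf) inE cpi0; exact: negbTE hfull.
  have := minmu _ gD' fI.
  rewrite /mu fI cD'.
  set c := (_ / _)%R.
  set K := #|~: fullI D|.
  have tK : t - #|fullI D| = K by have := cardsC (fullI D); rewrite card_ord /K; lia.
  set S := \sum_(k in ~: fullI D) #|part D k|.
  have ceq : c = (S%:R / K%:R)%R.
    by rewrite /c tK {1}(sum_split D) natrD addrAC subrr add0r.
  have jC : j \in ~: fullI D by rewrite in_setC.
  have i0C : i0 \in ~: fullI D by rewrite in_setC.
  have K0 : 0 < K by apply/card_gt0P; exists j.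
  have hS1 : K * l < S.
    apply: (sum_gt_const jC) => [k|]; last by lia.
    by rewrite in_setC; apply: lmin.
  have hS2 : S < K * #|part D j|.
    apply: (sum_lt_const i0C) => [k|]; last by rewrite i0l; lia.
    by rewrite in_setC; apply: jmax.
  have cl : ((#|part D i0|)%:R < c :> rat)%R.
    by rewrite ceq ltr_pdivlMr ?ltr0n // -natrM ltr_nat i0l mulnC.
  have cu : (c < (#|part D j|)%:R :> rat)%R.
    by rewrite ceq ltr_pdivrMr ?ltr0n // -natrM ltr_nat mulnC.
  have cpj : ((#|part D j|)%:R = (#|part D' j|)%:R + 1 :> rat)%R.
    by have := cp j; rewrite eqxx eq_sym (negbTE ji0) addn0 addn1 => <-; rewrite natr1.
  move=> hle.
  have : (\sum_(k in ~: fullI D) `|(#|part D' k|)%:R - c| <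
          \sum_(k in ~: fullI D) `|(#|part D k|)%:R - c| :> rat)%R.
    apply: (sum_lt2 jC i0C ji0).
      move=> k _ kj ki0.
      have e : #|part D' k| = #|part D k|.
        by have := cp k; rewrite eq_sym (negbTE kj) eq_sym (negbTE ki0) !addn0.
      by rewrite e.
    rewrite cpi0 -natr1.
    have Hk := key_ineq cl cu.
    rewrite cpj addrK in Hk.
    have h2 : (#|part D i0| + 2 <= #|part D' j| + 1)%N.
      have := cp j; rewrite eqxx eq_sym (negbTE ji0) addn0 i0l => ->; by rewrite addn2.
    have h2r : (#|part D i0|%:R + 2 <= #|part D' j|%:R + 1 :> rat)%R.
      by rewrite -(ler_nat rat) !natrD in h2.
    rewrite cpj; exact: Hk h2r.
  move=> hlt; by rewrite ltNge hle in hlt.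
have hB : #|A| != 1.
  apply/negP => /cards1P [a Aa].
  have aA : a \in A by rewrite Aa set11.
  move: aA; rewrite inE => /andP[anf /eqP xa].
  have [x xP] : exists x, x \in part D a by apply/card_gt0P; rewrite xa.
  move: xP; rewrite inE => /andP[xD /eqP tx].
  have hlt : forall i, i \notin fullI D -> i != a -> #|part D i| < #|part D a|.
    move=> k knf ka; rewrite xa ltn_neqAle hM // andbT; apply/negP => /eqP e.
    have : k \in A by rewrite inE knf e eqxx.
    by rewrite Aa inE; apply/negP.
  have pD' := remove_dom pD xD tx anf hlt.
  have := minD _ pD'; rewrite (cardsD1 x D) xD.
  by rewrite add1n ltnn.
have hC : #|A| <= t - #|fullI D| - 1.
  have sub : A \subset (~: fullI D) :\ i0.
    apply/subsetP => k; rewrite !inE => /andP[knf /eqP e]; rewrite knf andbT.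
    by apply/eqP => ek; move: e; rewrite ek i0l => /eqP; rewrite -addn1 -{1}(addn0 l) eqn_add2l.
  move/subset_leq_card: sub.
  have Kc := cardsC (fullI D); rewrite card_ord in Kc.
  have := cardsD1 i0 (~: fullI D); rewrite in_setC i0nf /=.
  move: hB Kc; clear; set a := #|A|; set b := #|fullI D|; set c := #|~: fullI D|; set d := #|_ :\ i0|.
  lia.
move: hB hC; clear; set a := #|A|; lia.
Qed.
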